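(* Let $(\mathcal{E},\mathcal{L},\mathcal{B})$ be a weakly left resolving labelled space with associated inverse semigroup $S$, let $\alpha\in\mathcal{L}^\infty$ and let $\{\mathcal{F}_n\}_{n\ge0}$ be an admissible family for $\alpha$. For $n\ge0$ define \[\overline{\mathcal{F}}_n=\{A\in\mathcal{B}_{\alpha_{1,n}}:\ r(A,\alpha_{n+1,m})\in\mathcal{F}_m\ \text{for some } m\ge n\}.\] Then: (i) $\mathcal{F}_n\subseteq\overline{\mathcal{F}}_n$ for all $n\ge0$; (ii) $\{\overline{\mathcal{F}}_n\}_{n\ge0}$ is a complete family for $\alpha$; (iii) the filters $\bigcup_{n}\bigcup_{A\in\mathcal{F}_n}\uparrow(\alpha_{1,n},A,\alpha_{1,n})$ and $\bigcup_{n}\bigcup_{A\in\overline{\mathcal{F}}_n}\uparrow(\alpha_{1,n},A,\alpha_{1,n})$ of $E(S)$ coincide; (iv) if $\xi$ denotes this filter, then $\{A\in\mathcal{B}:(\alpha_{1,n},A,\alpha_{1,n})\in\xi\}=\overline{\mathcal{F}}_n$ for all $n\ge0$.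
   Context: A directed graph $\mathcal{E}=(\mathcal{E}^0,\mathcal{E}^1,r,s)$ has countable nonempty vertex set, edge set, range/source maps; paths satisfy $r(\lambda_i)=s(\lambda_{i+1})$. A labelled graph has a surjective labelling $\mathcal{L}:\mathcal{E}^1\to\mathcal{A}$ extended letterwise to finite and infinite paths. $\omega$ is the empty word, $\mathcal{L}^+=\bigcup_{n\ge1}\mathcal{L}(\mathcal{E}^n)$, $\mathcal{L}^*=\{\omega\}\cup\mathcal{L}^+$, $\mathcal{L}^\infty$ the labels of infinite paths; $\alpha_{i,j}=\alpha_i\cdots\alpha_j$ for $i\le j$, $=\omega$ for $j<i$. For $A\subseteq\mathcal{E}^0$, $\alpha\in\mathcal{L}^+$: $r(A,\alpha)=\{r(\lambda):\mathcal{L}(\lambda)=\alpha,\ s(\lambda)\in A\}$, $r(A,\omega)=A$, $r(\alpha)=r(\mathcal{E}^0,\alpha)$. $\mathcal{B}$ accommodating: closed under $r(\cdot,\alpha)$, finite intersections and unions, contains $r(\alpha)$ for $\alpha\in\mathcal{L}^+$; labelled space weakly left resolving if $r(A\cap B,\alpha)=r(A,\alpha)\cap r(B,\alpha)$ for $A,B\in\mathcal{B}$, $\alpha\in\mathcal{L}^+$. $\mathcal{B}_\alpha=\mathcal{B}\cap\mathcal{P}(r(\alpha))$. $S$ = triples $(\alpha,A,\beta)$, $\alpha,\beta\in\mathcal{L}^*$, $\emptyset\ne A\in\mathcal{B}_\alpha\cap\mathcal{B}_\beta$, plus $0$; product $(\alpha,A,\beta)(\gamma,B,\delta)=(\alpha\gamma',r(A,\gamma')\cap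 B,\delta)$ if $\gamma=\beta\gamma'$, $=(\alpha,A\cap r(B,\beta'),\delta\beta')$ if $\beta=\gamma\beta'$, $=0$ otherwise (empty middle entry identified with $0$). $E(S)=\{(\alpha,A,\alpha)\}\cup\{0\}$, $p\le q$ iff $pq=p$; $(\alpha,A,\alpha)\le(\beta,B,\beta)$ iff $\alpha=\beta\alpha'$ and $A\subseteq r(B,\alpha')$; $\uparrow x=\{y:x\le y\}$. Filters in $\mathcal{B}_\alpha$ (under inclusion): nonempty upward-closed subsets not containing $\emptyset$ and closed under finite intersections. A family $\{\mathcal{F}_n\}_{n\ge0}$ with $\mathcal{F}_n$ a filter in $\mathcal{B}_{\alpha_{1,n}}$ for $n>0$ and $\mathcal{F}_0$ a filter in $\mathcal{B}$ or empty is admissible for $\alpha$ if $\mathcal{F}_n\subseteq\{A\in\mathcal{B}_{\alpha_{1,n}}:r(A,\alpha_{n+1})\in\mathcal{F}_{n+1}\}$ for all $n\ge0$, and complete if equality holds for all $n\ge0$. *)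

(* Defs.v *)
From Stdlib Require Import List Arith.
Import ListNotations.
Set Implicit Arguments.

Section LS.
Variables (V Ed Alph : Type) (rg src : Ed -> V) (L : Ed -> Alph).

Definition subset (A C : V -> Prop) : Prop := forall v, A v -> C v.
Definition setI (A C : V -> Prop) : V -> Prop := fun v => A v /\ C v.
Definition setU (A C : V -> Prop) : V -> Prop := fun v => A v \/ C v.
Definition seteq (A C : V -> Prop) : Prop := forall v, A v <-> C v.
Definition setT : V -> Prop := fun _ => True.

Fixpoint is_path (l : list Ed) : Prop :=
  match l with
  | [] => True
  | e :: l' => match l' with
               | [] => True
               | f :: _ => rg e = src f /\ is_path l'
               end
  end.

Definition in_Lplus (w : list Alph) : Prop :=
  exists (e : Ed) (l : list Ed), is_path (e :: l) /\ map L (e :: l) = w.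
Definition in_Lstar (w : list Alph) : Prop := w = [] \/ in_Lplus w.

(** L^infty : labels of infinite paths; alpha i is the letter alpha_{i+1} *)
Definition in_Linf (alpha : nat -> Alph) : Prop :=
  exists f : nat -> Ed, (forall i, rg (f i) = src (f (S i))) /\
                        (forall i, alpha i = L (f i)).

(** alpha_{i,j} = alpha_i ... alpha_j (1-based), omega if j < i *)
Definition seg (alpha : nat -> Alph) (i j : nat) : list Alph :=
  map (fun k => alpha (k - 1)) (seq i (S j - i)).

Definition rset (A : V -> Prop) (w : list Alph) : V -> Prop :=
  match w with
  | [] => A
  | _ => fun v => exists (e : Ed) (l : list Ed),
           is_path (e :: l) /\ map L (e :: l) = w /\ A (src e) /\ rg (last l e) = v
  end.

Definition rword (w : list Alph) : V -> Prop := rset setT w.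

Definition countable (T : Type) : Prop :=
  exists f : T -> nat, forall x y, f x = f y -> x = y.

Definition labelled_graph : Prop :=
  countable V /\ inhabited V /\ countable Ed /\ (forall a : Alph, exists e, L e = a).

Definition accommodating (B : (V -> Prop) -> Prop) : Prop :=
  (forall A w, B A -> in_Lplus w -> B (rset A w)) /\
  (forall A C, B A -> B C -> B (setI A C)) /\
  (forall A C, B A -> B C -> B (setU A C)) /\
  (forall w, in_Lplus w -> B (rword w)).

Definition weakly_left_resolving (B : (V -> Prop) -> Prop) : Prop :=
  forall A C w, B A -> B C -> in_Lplus w ->
    seteq (rset (setI A C) w) (setI (rset A w) (rset C w)).

Definition Bw (B : (V -> Prop) -> Prop) (w : list Alph) (A : V -> Prop) : Prop :=
  B A /\ subset A (rword w).

Definition is_filter_in (D : (V -> Prop) -> Prop) (F : (V -> Prop) -> Prop) : Prop :=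
  (exists A, F A) /\
  (forall A, F A -> D A) /\
  (forall A, F A -> exists v, A v) /\
  (forall A C, F A -> D C -> subset A C -> F C) /\
  (forall A C, F A -> F C -> F (setI A C)).

Definition family_filters (B : (V -> Prop) -> Prop) (alpha : nat -> Alph)
    (F : nat -> (V -> Prop) -> Prop) : Prop :=
  (is_filter_in B (F 0) \/ (forall A, ~ F 0 A)) /\
  (forall n, 0 < n -> is_filter_in (Bw B (seg alpha 1 n)) (F n)).

Definition admissible (B : (V -> Prop) -> Prop) (alpha : nat -> Alph)
    (F : nat -> (V -> Prop) -> Prop) : Prop :=
  family_filters B alpha F /\
  (forall n A, F n A ->
     Bw B (seg alpha 1 n) A /\ F (S n) (rset A (seg alpha (S n) (S n)))).

Definition complete (B : (V -> Prop) -> Prop) (alpha : nat -> Alph)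
    (F : nat -> (V -> Prop) -> Prop) : Prop :=
  family_filters B alpha F /\
  (forall n A, F n A <->
     (Bw B (seg alpha 1 n) A /\ F (S n) (rset A (seg alpha (S n) (S n))))).

Definition Fbar (B : (V -> Prop) -> Prop) (alpha : nat -> Alph)
    (F : nat -> (V -> Prop) -> Prop) (n : nat) (A : V -> Prop) : Prop :=
  Bw B (seg alpha 1 n) A /\
  exists m, n <= m /\ F m (rset A (seg alpha (S n) m)).

(** E(S): idempotents (alpha, A, alpha) and 0 *)
Inductive idem : Type :=
| Zero : idem
| Trip : list Alph -> (V -> Prop) -> idem.

Definition in_ES (B : (V -> Prop) -> Prop) (p : idem) : Prop :=
  match p with
  | Zero => True
  | Trip w A => in_Lstar w /\ Bw B w A /\ exists v, A v
  end.

Definition idem_le (p q : idem) : Prop :=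
  match p, q with
  | Zero, _ => True
  | Trip _ _, Zero => False
  | Trip a A, Trip b C => exists a', a = b ++ a' /\ subset A (rset C a')
  end.

Definition upset (B : (V -> Prop) -> Prop) (x : idem) (y : idem) : Prop :=
  in_ES B y /\ idem_le x y.

Definition filt_of (B : (V -> Prop) -> Prop) (alpha : nat -> Alph)
    (F : nat -> (V -> Prop) -> Prop) (y : idem) : Prop :=
  exists n A, F n A /\ upset B (Trip (seg alpha 1 n) A) y.

End LS.

(* Main.v *)
Require Import Defs.
From Stdlib Require Import List Arith Lia Classical.
Import ListNotations.
Set Implicit Arguments.

Lemma last_cons' (T : Type) (a d : T) (l : list T) : last (a :: l) d = last l a.
Proof. revert a d. induction l as [|b l IH]; intros a d; [reflexivity|].
  change (last (b :: l) d = last (b :: l) a). rewrite !IH. reflexivity. Qed.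

Lemma last_app' (T : Type) (l l' : list T) (a d : T) : last (l ++ a :: l') d = last l' a.
Proof. revert d. induction l as [|b l IH]; intros d; simpl app; rewrite last_cons'; auto. Qed.

Lemma is_path_app (V Ed : Type) (rg src : Ed -> V) (l l' : list Ed) (e e' : Ed) :
  is_path rg src (e :: l) -> is_path rg src (e' :: l') -> rg (last l e) = src e' ->
  is_path rg src (e :: l ++ e' :: l').
Proof.
  revert e. induction l as [|x l IH]; intros e H1 H2 H3.
  - simpl in *. split; auto.
  - destruct H1 as [Hx H1]. change (rg e = src x /\ is_path rg src (x :: l ++ e' :: l')).
    split; auto.
    apply IH; auto. rewrite last_cons' in H3. exact H3.
Qed.

Lemma is_path_split (V Ed : Type) (rg src : Ed -> V) (l l' : list Ed) (e e' : Ed) :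
  is_path rg src (e :: l ++ e' :: l') ->
  is_path rg src (e :: l) /\ is_path rg src (e' :: l') /\ rg (last l e) = src e'.
Proof.
  revert e. induction l as [|x l IH]; intros e H.
  - simpl in *. destruct l'; destruct H; auto.
  - destruct H as [Hx H]. destruct (IH x H) as (A1 & A2 & A3).
    split; [split; auto|]. split; auto. rewrite last_cons'. auto.
Qed.

Lemma rset_comp (V Ed Alph : Type) (rg src : Ed -> V) (L : Ed -> Alph) A u w :
  seteq (rset rg src L (rset rg src L A u) w) (rset rg src L A (u ++ w)).
Proof.
  destruct u as [|a u]; [simpl; intro; tauto|].
  destruct w as [|b w]; [rewrite app_nil_r; simpl; intro; tauto|].
  intro v0; split.
  - intros (e' & l' & Hp' & Hm' & (e & l & Hp & Hm & HA & Hr) & Hr').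
    exists e, (l ++ e' :: l'). repeat split.
    + apply is_path_app; auto.
    + rewrite app_comm_cons, map_app, Hm, Hm'. reflexivity.
    + auto.
    + rewrite last_app'. auto.
  - intros (e & l & Hp & Hm & HA & Hr).
    rewrite <- app_comm_cons in Hm.
    change (map L (e :: l) = (a :: u) ++ b :: w) in Hm.
    apply map_eq_app in Hm. destruct Hm as (l1 & l2 & Hl & Hm1 & Hm2).
    destruct l1 as [|e1 l1]; [discriminate|].
    destruct l2 as [|e2 l2]; [discriminate|].
    simpl in Hl. injection Hl; intros Hl' He; subst e1 l.
    apply is_path_split in Hp. destruct Hp as (P1 & P2 & P3).
    exists e2, l2. repeat split; auto.
    + exists e, l1. repeat split; auto.
    + rewrite <- Hr. rewrite last_app'. auto.
Qed.

Lemma seg_app (Alph : Type) (alpha : nat -> Alph) i j k :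
  i <= S j -> j <= k -> seg alpha i j ++ seg alpha (S j) k = seg alpha i k.
Proof.
  intros H1 H2. unfold seg. rewrite <- map_app. f_equal.
  replace (S k - i) with ((S j - i) + (S k - S j)) by lia. rewrite seq_app.
  replace (i + (S j - i)) with (S j) by lia. reflexivity.
Qed.

Lemma seg_nil (Alph : Type) (alpha : nat -> Alph) n : seg alpha (S n) n = [].
Proof. unfold seg. replace (S n - S n) with 0 by lia. reflexivity. Qed.

Lemma seg_length (Alph : Type) (alpha : nat -> Alph) n : length (seg alpha 1 n) = n.
Proof. unfold seg. rewrite length_map, length_seq. lia. Qed.

Lemma seg_Lplus (V Ed Alph : Type) (rg src : Ed -> V) (L : Ed -> Alph) alpha n m :
  in_Linf rg src L alpha -> n < m -> in_Lplus rg src L (seg alpha (S n) m).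
Proof.
  intros [f [Hf1 Hf2]] Hnm. unfold seg.
  replace (S m - S n) with (S (m - S n)) by lia. set (d := m - S n). clearbody d.
  exists (f n), (map f (seq (S n) d)). split.
  - clear Hnm. revert n. induction d as [|d IH]; intros n; [exact I|].
    change (rg (f n) = src (f (S n)) /\ is_path rg src (f (S n) :: map f (seq (S (S n)) d))).
    split; auto.
  - rewrite <- seq_shift, map_map. simpl. rewrite Nat.sub_0_r, Hf2. f_equal.
    rewrite <- !seq_shift, !map_map. apply map_ext. intro a. rewrite Hf2. reflexivity.
Qed.

Lemma seg_Lstar (V Ed Alph : Type) (rg src : Ed -> V) (L : Ed -> Alph) alpha n :
  in_Linf rg src L alpha -> in_Lstar rg src L (seg alpha 1 n).
Proof.
  intros H. destruct n; [left; reflexivity|]. right. apply seg_Lplus; auto. lia.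
Qed.

Lemma rset_mono (V Ed Alph : Type) (rg src : Ed -> V) (L : Ed -> Alph) A C w :
  subset A C -> subset (rset rg src L A w) (rset rg src L C w).
Proof.
  intros H v. destruct w; simpl; [apply H|].
  intros (e & l & H1 & H2 & H3 & H4). exists e, l. auto.
Qed.

Lemma rset_ne (V Ed Alph : Type) (rg src : Ed -> V) (L : Ed -> Alph) A w v :
  rset rg src L A w v -> exists u, A u.
Proof.
  destruct w; simpl; eauto.
  intros (e & l & H1 & H2 & H3 & H4). eauto.
Qed.

Lemma Bw_rset (V Ed Alph : Type) (rg src : Ed -> V) (L : Ed -> Alph) B alpha n k A :
  accommodating rg src L B -> in_Linf rg src L alpha ->
  Bw rg src L B (seg alpha 1 n) A -> n <= k ->
  Bw rg src L B (seg alpha 1 k) (rset rg src L A (seg alpha (S n) k)).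
Proof.
  intros Hacc Hal [HA1 HA2] Hnk.
  destruct (Nat.eq_dec n k) as [<-|Hne].
  - rewrite seg_nil. split; auto.
  - split.
    + apply (proj1 Hacc); auto. apply seg_Lplus; auto. lia.
    + intros v Hv. apply rset_mono with (C := rword rg src L (seg alpha 1 n)) in Hv; [|exact HA2].
      unfold rword in Hv. apply rset_comp in Hv. rewrite seg_app in Hv by lia. exact Hv.
Qed.

Lemma Ffilt (V Ed Alph : Type) (rg src : Ed -> V) (L : Ed -> Alph) B alpha F m X :
  admissible rg src L B alpha F -> F m X ->
  is_filter_in (Bw rg src L B (seg alpha 1 m)) (F m).
Proof.
  intros [[[H0|H0] Hn] _] HX.
  - destruct m.
    + destruct H0 as (a1 & a2 & a3 & a4 & a5). split; [auto|]. split; [|split; [auto|split; [|auto]]].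
      * intros A HA. split; [apply a2; auto|]. intros v _. exact I.
      * intros A C HA [HC _] HAC. eauto.
    + apply Hn. lia.
  - destruct m; [exfalso; eapply H0; eauto|]. apply Hn. lia.
Qed.

Lemma Fup (V Ed Alph : Type) (rg src : Ed -> V) (L : Ed -> Alph) B alpha F m X Y :
  admissible rg src L B alpha F -> F m X ->
  Bw rg src L B (seg alpha 1 m) Y -> subset X Y -> F m Y.
Proof.
  intros HF HX HY HXY. destruct (Ffilt m X HF HX) as (a1 & a2 & a3 & a4 & a5). eauto.
Qed.

Lemma push (V Ed Alph : Type) (rg src : Ed -> V) (L : Ed -> Alph) B alpha F n k X :
  accommodating rg src L B -> in_Linf rg src L alpha ->
  admissible rg src L B alpha F -> F n X -> n <= k ->
  F k (rset rg src L X (seg alpha (S n) k)).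
Proof.
  intros Hacc Hal HF HX Hnk.
  replace k with (n + (k - n)) by lia. generalize (k - n) as d. clear k Hnk.
  intro d. induction d as [|d IH].
  - rewrite Nat.add_0_r, seg_nil. exact HX.
  - pose proof ((proj2 HF) _ _ IH) as [_ H2].
    replace (n + S d) with (S (n + d)) by lia.
    eapply Fup; [exact HF|exact H2| |].
    + apply Bw_rset; auto. apply (proj2 HF); auto. lia.
    + intros v Hv. apply rset_comp in Hv. rewrite seg_app in Hv by lia. exact Hv.
Qed.

Lemma reach (V Ed Alph : Type) (rg src : Ed -> V) (L : Ed -> Alph) B alpha F n m k A :
  accommodating rg src L B -> in_Linf rg src L alpha ->
  admissible rg src L B alpha F -> Bw rg src L B (seg alpha 1 n) A ->
  F m (rset rg src L A (seg alpha (S n) m)) -> n <= m -> m <= k ->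
  F k (rset rg src L A (seg alpha (S n) k)).
Proof.
  intros Hacc Hal HF HA HX H1 H2.
  assert (H : F k (rset rg src L (rset rg src L A (seg alpha (S n) m)) (seg alpha (S m) k)))
    by (eapply push; eauto).
  eapply Fup; [exact HF|exact H| apply Bw_rset; auto; lia |].
  intros v Hv. apply rset_comp in Hv. rewrite seg_app in Hv by lia. exact Hv.
Qed.

Lemma Fbar_filter (V Ed Alph : Type) (rg src : Ed -> V) (L : Ed -> Alph) B alpha F n :
  accommodating rg src L B -> weakly_left_resolving rg src L B -> in_Linf rg src L alpha ->
  admissible rg src L B alpha F -> (exists A, Fbar rg src L B alpha F n A) ->
  is_filter_in (Bw rg src L B (seg alpha 1 n)) (Fbar rg src L B alpha F n).
Proof.
  intros Hacc Hwlr Hal HF Hne. split; [exact Hne|]. split; [intros A [H _]; exact H|].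
  split.
  { intros A [_ (m & _ & Hm)].
    destruct (Ffilt m _ HF Hm) as (_ & _ & a3 & _ & _).
    destruct (a3 _ Hm) as [v Hv]. eapply rset_ne; eauto. }
  split.
  { intros A C [HA (m & H1 & Hm)] HC HAC. split; auto. exists m; split; auto.
    eapply Fup; [exact HF|exact Hm| |].
    - apply Bw_rset; auto.
    - apply rset_mono; auto. }
  intros A C [HA (m1 & a1 & b1)] [HC (m2 & a2 & b2)].
  set (k := max m1 m2).
  assert (FA : F k (rset rg src L A (seg alpha (S n) k))) by (eapply reach; eauto; lia).
  assert (FC : F k (rset rg src L C (seg alpha (S n) k))) by (eapply reach; eauto; lia).
  destruct (Ffilt k _ HF FA) as (_ & _ & _ & _ & a5).
  assert (HAC : Bw rg src L B (seg alpha 1 n) (setI A C)).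
  { split. - apply (proj1 (proj2 Hacc)); [apply HA|apply HC].
    - intros v [Hv _]. apply (proj2 HA); auto. }
  split; auto. exists k. split; [lia|].
  eapply Fup; [exact HF|exact (a5 _ _ FA FC)| apply Bw_rset; auto; lia|].
  destruct (Nat.eq_dec n k) as [<-|Hne'].
  - rewrite seg_nil. intros v Hv. exact Hv.
  - intros v Hv. apply (Hwlr A C); [apply HA|apply HC| apply seg_Lplus; auto; lia|exact Hv].
Qed.

Lemma filter_Bw0 (V Ed Alph : Type) (rg src : Ed -> V) (L : Ed -> Alph) B alpha G :
  is_filter_in (Bw rg src L B (seg alpha 1 0)) G -> is_filter_in B G.
Proof.
  intros (a1 & a2 & a3 & a4 & a5). split; [auto|]. split; [intros A HA; apply a2; auto|].
  split; [auto|]. split; [|auto]. intros A C HA HC HAC. apply (a4 A); auto.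
  split; auto. intros v _. exact I.
Qed.

Unset Implicit Arguments.

Theorem mainTheorem10 (V Ed Alph : Type) (rg src : Ed -> V) (L : Ed -> Alph)
    (B : (V -> Prop) -> Prop)
    (Hgraph : labelled_graph V L)
    (Hacc : accommodating rg src L B)
    (Hwlr : weakly_left_resolving rg src L B)
    (alpha : nat -> Alph) (Halpha : in_Linf rg src L alpha)
    (F : nat -> (V -> Prop) -> Prop) (HF : admissible rg src L B alpha F) :
  (forall n A, F n A -> Fbar rg src L B alpha F n A) /\
  complete rg src L B alpha (Fbar rg src L B alpha F) /\
  (forall y, filt_of rg src L B alpha F y <->
             filt_of rg src L B alpha (Fbar rg src L B alpha F) y) /\
  (forall n A, (B A /\ filt_of rg src L B alpha F (Trip (seg alpha 1 n) A)) <->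
               Fbar rg src L B alpha F n A).
Proof.
  assert (P1 : forall n A, F n A -> Fbar rg src L B alpha F n A).
  { intros n A HA. split; [apply (proj2 HF); auto|]. exists n. split; auto.
    rewrite seg_nil. exact HA. }
  assert (P3 : forall y, filt_of rg src L B alpha F y <->
             filt_of rg src L B alpha (Fbar rg src L B alpha F) y).
  { intros y; split.
    - intros (n & A & HA & Hup). exists n, A. split; auto.
    - intros (n & A & [HA (m & H1 & Hm)] & [Hy Hle]).
      exists m, (rset rg src L A (seg alpha (S n) m)). split; auto. split; auto.
      destruct y as [|b C]; [destruct Hle|]. simpl in Hle.
      destruct Hle as (a' & Ha' & Hsub). simpl.
      exists (a' ++ seg alpha (S n) m). split.
      + rewrite app_assoc, <- Ha', seg_app; auto; lia.
      + intros v Hv. apply rset_comp. eapply rset_mono; eauto. }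
  split; [exact P1|]. split; [|split; [exact P3|]].
  - split; [split|].
    + destruct (classic (exists A, Fbar rg src L B alpha F 0 A)) as [He|He]; [left|right].
      * eapply filter_Bw0. apply Fbar_filter; auto.
      * intros A HA. apply He; eauto.
    + intros n Hn. apply Fbar_filter; auto.
      destruct ((proj2 (proj1 HF)) n Hn) as ([A HA] & _). exists A. apply P1; auto.
    + intros n A. split.
      * intros [HA (m & H1 & Hm)]. split; auto.
        assert (HB1 : Bw rg src L B (seg alpha 1 (S n)) (rset rg src L A (seg alpha (S n) (S n))))
          by (apply Bw_rset; auto).
        split; [exact HB1|].
        set (k := max m (S n)). exists k. split; [lia|].
        assert (Fk : F k (rset rg src L A (seg alpha (S n) k))) by (eapply reach; eauto; lia).
        eapply Fup; [exact HF|exact Fk|apply Bw_rset; auto; lia|].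
        intros v Hv. apply rset_comp. rewrite seg_app by lia. exact Hv.
      * intros [HA [HB (m & H1 & Hm)]]. split; auto. exists m. split; [lia|].
        eapply Fup; [exact HF|exact Hm|apply Bw_rset; auto; lia|].
        intros v Hv. apply rset_comp in Hv. rewrite seg_app in Hv by lia. exact Hv.
  - intros n A. split.
    + intros [HBA (k & C & HC & [Hy Hle])].
      destruct Hy as (_ & HBw & _). destruct Hle as (a' & Ha' & Hsub).
      assert (Hk : n <= k).
      { apply (f_equal (@length _)) in Ha'. rewrite length_app, !seg_length in Ha'. lia. }
      rewrite <- (@seg_app _ alpha 1 n k) in Ha' by lia. apply app_inv_head in Ha'. subst a'.
      split; auto. exists k. split; auto.
      eapply Fup; [exact HF|exact HC|apply Bw_rset; auto|exact Hsub].
    + intros HFb. split; [destruct HFb as [[? ?] _]; auto|]. apply P3.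
      exists n, A. split; auto. split.
      * split; [apply seg_Lstar; auto|]. split; [apply HFb|].
        destruct HFb as [_ (m & _ & Hm)].
        destruct (Ffilt m _ HF Hm) as (_ & _ & a3 & _ & _).
        destruct (a3 _ Hm) as [v Hv]. eapply rset_ne; eauto.
      * exists []. rewrite app_nil_r. split; auto. intros v Hv; exact Hv.
Qed.
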